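(* Let $d\ge 2$ be an integer. Let $(\mathrm{CD}_d,H_d)$ be a $2$-weak combinatorial description of the elementary differentials in dimension $d$ which is compatible with $\mathrm{RT}$ via equivariant surjections $p_n:\mathrm{RT}(n)\to\mathrm{CD}_d(n)$. Then every $p_n$ is a bijection; that is, $\mathrm{RT}$ is the only $2$-weak combinatorial description of $\mathcal{W}_d$ compatible with $\mathrm{RT}$.
   Context: Rooted trees: a rooted tree on $[n]$ is a set $E$ of ordered pairs (an edge $(v,w)$ means $w$ is a child of $v$) such that exactly one vertex (the root) has no parent, every other vertex has exactly one parent, and all vertices are connected to the root by following parents; $\mathrm{RT}(n)$ is the set of these, with $\mathfrak{S}_n$ acting by relabelling. $\mathcal{C}_d=C^\infty(\mathbb{R}^d,\mathbb{R}^d)$. For $\tau$ with root $r$ whose children are $v_1,\dots,v_k$, recursively $F(\tau)((f^i)_{i})=\sum_{j_1,\dots,j_k=1}^d F(\tau_{v_1})(\cdots)_{j_1}\cdots F(\tau_{v_k})(\cdots)_{j_k}\,\partial_{j_1}\cdots\partial_{j_k}f^r$, with $\tau_{v_m}$ the subtree of $v_m$ and its descendants evaluated on the $f^i$ indexed by its vertices, $(\cdot)_j$ the $j$-th coordinate, $\partial_j=\partial/\partial x_j$ (single vertex: $F(\tau)=f^r$). Labellings: fix $\ell$ (here $\ell=2$). $\mathfrak{S}_n$ acts on $[\ell]^n$ by permuting coordinates; for $k=(k_1,\dots,k_\ell)\in\mathbb{N}^\ell$ with $\sum k_i=n$, $[\ell]^{k}$ is the set of words with exactly $k_i$ letters $i$.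 For a sequence $C=(C(n))_n$ of $\mathfrak{S}_n$-sets, $\mathrm{L}^{k}(C)=(C(n)\times[\ell]^{k})/\big((a,\sigma.x)\sim(\sigma.a,x)\big)$. For $\varphi:[\ell]\to[\ell]$, $k^\varphi_i=\sum_{j\in\varphi^{-1}(i)}k_j$ and $\varphi_*:\mathrm{L}^{k}(C)\to\mathrm{L}^{k^\varphi}(C)$, $(c,(x_1,\dots,x_n))\mapsto(c,(\varphi(x_1),\dots,\varphi(x_n)))$; on maps $\Phi:\mathcal{C}_d^\ell\to\mathcal{C}_d$, $(\varphi_*\Phi)(f^1,\dots,f^\ell)=\Phi(f^{\varphi(1)},\dots,f^{\varphi(\ell)})$. $F^{k}((\tau,x))(f^1,\dots,f^\ell)=F(\tau)(f^{x_1},\dots,f^{x_n})$, and $\mathcal{W}_d^{k}$ is the real span of $F^{k}(\mathrm{L}^{k}(\mathrm{RT}))$ (maps $\mathcal{C}_d^\ell\to\mathcal{C}_d$ homogeneous of degree $k_i$ in the $i$-th input). An $\ell$-weak combinatorial description is a sequence $\mathrm{CD}_d=(\mathrm{CD}_d(n))_n$ of $\mathfrak{S}_n$-sets together with maps $H_d^{k}:\mathrm{L}^{k}(\mathrm{CD}_d)\to\mathcal{W}_d^{k}$ for all $k\in\mathbb{N}^\ell$, whose images span $\mathcal{W}_d^{k}$, and with $H_d^{k^\varphi}\circ\varphi_*=\varphi_*\circ H_d^{k}$ for every $\varphi:[\ell]\to[\ell]$. It is compatible with $\mathrm{RT}$ if there are $\mathfrak{S}_n$-equivariant surjections $p_n:\mathrm{RT}(n)\to\mathrm{CD}_d(n)$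 with $F^{k}((\tau,x))=H^{k}_d((p_n(\tau),x))$ for all $\tau\in\mathrm{RT}(n)$, $x\in[\ell]^{k}$. *)

(* Defs.v *)
From HB Require Import structures.
From mathcomp Require Import all_boot all_order all_algebra all_fingroup.
From mathcomp Require Import all_classical all_reals all_analysis.
From Stdlib Require Lists.List.
Set Implicit Arguments.
Unset Strict Implicit.
Unset Printing Implicit Defensive.
Import Order.TTheory GRing.Theory Num.Theory.
Import numFieldNormedType.Exports.
Local Open Scope ring_scope.

Section Defs.
Variables (R : realType) (d : nat).

Definition vfield := 'rV[R]_d -> 'rV[R]_d.

Definition partial (j : 'I_d) (g : vfield) : vfield :=
  fun x => derive g x (delta_mx 0 j).

Definition iter_partial (js : seq 'I_d) (g : vfield) : vfield :=
  foldr (fun j h => partial j h) g js.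

Definition smooth (g : vfield) : Prop :=
  forall js : seq 'I_d,
    continuous (iter_partial js g) /\
    forall (j : 'I_d) (x : 'rV[R]_d), derivable (iter_partial js g) x (delta_mx 0 j).

Definition Cd := {g : vfield | smooth g}.

Definition Map := ('I_2 -> Cd) -> vfield.

End Defs.

Section Trees.
Variable n : nat.

Definition parents (E : {set 'I_n * 'I_n}) (v : 'I_n) : {set 'I_n} :=
  [set u | (u, v) \in E].

(* an edge (v,w) means w is a child of v; exactly one vertex r has no parent,
   every other vertex has exactly one parent, every vertex is reached from r
   following edges parent -> child *)
Definition is_rtree (E : {set 'I_n * 'I_n}) : bool :=
  [exists r : 'I_n, [forall v : 'I_n,
     [&& (#|parents E v| == 0%N) == (v == r),
         (v != r) ==> (#|parents E v| == 1%N) &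
         connect (fun a b => (a, b) \in E) r v]]].

Definition RT := {E : {set 'I_n * 'I_n} | is_rtree E}.

Definition relabel (s : {perm 'I_n}) (E : {set 'I_n * 'I_n}) : {set 'I_n * 'I_n} :=
  [set (s p.1, s p.2) | p in E].

Definition children (E : {set 'I_n * 'I_n}) (v : 'I_n) : seq 'I_n :=
  [seq w <- enum 'I_n | (v, w) \in E].

End Trees.

Section Elem.
Variables (R : realType) (d n : nat).
Local Open Scope ring_scope.

(* F(tau_v)((f^i)_i), computed with fuel (the depth of a tree on [n] is < n) *)
Fixpoint elemF (E : {set 'I_n * 'I_n}) (f : 'I_n -> vfield R d)
    (fuel : nat) (v : 'I_n) : vfield R d :=
  match fuel with
  | 0 => fun _ => 0
  | fuel'.+1 => fun x =>
      let cs := children E v in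
      \sum_(J : {ffun 'I_(size cs) -> 'I_d})
        (\prod_(m < size cs) (elemF E f fuel' (nth v cs m) x) ord0 (J m)) *:
        iter_partial [seq J m | m <- enum 'I_(size cs)] (f v) x
  end.

Definition root (E : {set 'I_n * 'I_n}) : option 'I_n :=
  [pick r | #|parents E r| == 0%N].

Definition F (t : RT n) (f : 'I_n -> vfield R d) : vfield R d :=
  match root (val t) with
  | Some r => elemF (val t) f n r
  | None => fun _ => 0
  end.

Definition Fk (t : RT n) (x : 'I_n -> 'I_2) : Map R d :=
  fun g => F t (fun i => sval (g (x i))).

End Elem.

Definition wcount (n : nat) (x : 'I_n -> 'I_2) (i : 'I_2) : nat :=
  #|[set j | x j == i]|.

Definition lincomb (R : realType) (d : nat) (T : Type)
    (G : T -> Map R d) (s : seq (T * R)) : Map R d :=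
  fun g y => \sum_(t <- s) t.2 *: G t.1 g y.

(* W_d^k = real span of F^k(L^k(RT)) *)
Definition W (R : realType) (d : nat) (k : 'I_2 -> nat) (Phi : Map R d) : Prop :=
  exists (n : nat) (s : seq ((RT n * ('I_n -> 'I_2)) * R)),
    (forall t, Stdlib.Lists.List.In t s -> forall i, wcount t.1.2 i = k i) /\
    Phi = lincomb (fun tx => @Fk R d n tx.1 tx.2) s.

Definition pushMap (R : realType) (d : nat) (phi : 'I_2 -> 'I_2) (Phi : Map R d)
  : Map R d := fun g => Phi (fun i => g (phi i)).

(* a sequence of S_n-sets (left actions, s.(t.a) = (s o t).a; note that in
   MathComp (t * s) is the permutation "t then s" = s o t) *)
Definition is_Sn_set (C : nat -> Type) (act : forall n, {perm 'I_n} -> C n -> C n)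
  : Prop :=
  (forall n (a : C n), act n 1%g a = a) /\
  (forall n (s t : {perm 'I_n}) (a : C n), act n s (act n t a) = act n (t * s)%g a).

(* H is given on
   representatives (a, x) of L^k(CD) = (CD(n) x [2]^k)/~ ; it must be
   well defined on the quotient: H(a, s.x) = H(s.a, x) with (s.x)_i = x_{s(i)}. *)
Definition weak_comb_descr (R : realType) (d : nat) (CD : nat -> Type)
    (act : forall n, {perm 'I_n} -> CD n -> CD n)
    (H : forall n, CD n -> ('I_n -> 'I_2) -> Map R d) : Prop :=
  [/\ is_Sn_set act,
      (forall n (s : {perm 'I_n}) (a : CD n) (x : 'I_n -> 'I_2),
          H n a (fun i => x (s i)) = H n (act n s a) x),
      (forall n (a : CD n) (x : 'I_n -> 'I_2), @W R d (wcount x) (H n a x)),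
      (forall (k : 'I_2 -> nat) (Phi : Map R d), @W R d k Phi ->
         exists (n : nat) (s : seq ((CD n * ('I_n -> 'I_2)) * R)),
           (forall t, Stdlib.Lists.List.In t s -> forall i, wcount t.1.2 i = k i) /\
           Phi = lincomb (fun ax => H n ax.1 ax.2) s) &
      (forall (phi : 'I_2 -> 'I_2) n (a : CD n) (x : 'I_n -> 'I_2),
          H n a (fun i => phi (x i)) = pushMap phi (H n a x))].

Definition compatible_RT (R : realType) (d : nat) (CD : nat -> Type)
    (act : forall n, {perm 'I_n} -> CD n -> CD n)
    (H : forall n, CD n -> ('I_n -> 'I_2) -> Map R d)
    (p : forall n, RT n -> CD n) : Prop :=
  [/\
      (forall n (s : {perm 'I_n}) (t t' : RT n),
          val t' = relabel s (val t) -> p n t' = act n s (p n t)),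
      (forall n (c : CD n), exists t : RT n, p n t = c) &
      (forall n (t : RT n) (x : 'I_n -> 'I_2), @Fk R d n t x = H n (p n t) x)].

(* Main.v *)
Require Import Defs.
From HB Require Import structures.
From mathcomp Require Import all_boot all_order all_algebra all_fingroup.
From mathcomp Require Import all_classical all_reals all_analysis.
Set Implicit Arguments. Unset Strict Implicit. Unset Printing Implicit Defensive.
Import Order.TTheory GRing.Theory Num.Theory.
Import numFieldNormedType.Exports.
Local Open Scope classical_set_scope.
Local Open Scope ring_scope.

Section An.
Variables (R : realType) (d : nat) (b : 'I_d -> R).
Definition Lb (y : 'rV[R]_d) : R := \sum_i b i * y ord0 i.
Definition gE (e : 'rV[R]_d) : vfield R d := fun y => expR (Lb y) *: e.

Lemma Lb_lin h v a : Lb (h *: v + a) = h * Lb v + Lb a.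
Proof.
rewrite /Lb mulr_sumr -big_split /=; apply: eq_bigr => i _.
by rewrite !mxE mulrDr mulrCA.
Qed.

Lemma gE_derive e a v : is_derive a v (gE e) ((Lb v * expR (Lb a)) *: e).
Proof.
pose c := Lb v.
pose E := fun h : R => expR (h * c + Lb a).
have hE : is_derive (0:R) 1 E (c * expR (Lb a)).
  have -> : c * expR (Lb a) = expR (0 * c + Lb a) * (1 * c + 0).
    by rewrite mul0r add0r mul1r addr0 mulrC.
  apply: (@is_derive1_comp _ expR (fun h => h * c + Lb a)).
  apply: is_deriveD.
  have H := @is_deriveM _ _ id (cst c) 0 1 _ _ (is_derive_id _ _) (is_derive_cst _ _ _).
  apply: is_derive_eq H _.
  by rewrite /= scaler0 add0r /cst mul1r; exact: mulr1.
pose Q := fun h : R => h^-1 *: ((E \o shift 0) (h *: 1) - E 0).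
have HQ : Q @ 0^' --> (c * expR (Lb a)).
  rewrite -(@derive_val _ _ _ _ _ _ _ hE); exact: ex_derive.
have HE : (fun h => h^-1 *: ((gE e \o shift a) (h *: v) - gE e a)) = (fun h => Q h *: e).
  apply/funext => h; rewrite /Q /E /gE /= Lb_lin -scalerA scalerBr !scalerBl.
  by rewrite mul0r add0r addr0 (_ : h%:A = h) ?scalerBr //; exact: mulr1.
have Hc : (fun h => h^-1 *: ((gE e \o shift a) (h *: v) - gE e a)) @ 0^' --> (c * expR (Lb a)) *: e.
  by rewrite HE; apply: cvgZr_tmp.
apply: DeriveDef; first exact: cvgP Hc.
exact: cvg_lim Hc.
Qed.
End An.

Section An.
Variables (R : realType) (d : nat) (b : 'I_d -> R).

Lemma Lb_diff x : differentiable (@Lb R d b) x.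
Proof.
have -> : @Lb R d b = \sum_(i < d) (fun y : 'rV[R]_d => b i * y ord0 i).
  by apply/funext => y; rewrite fct_sumE.
apply: differentiable_sum => i.
apply: differentiableM; first exact: differentiable_cst.
exact: differentiable_coord.
Qed.

Lemma gE_diff e x : differentiable (gE b e) x.
Proof.
apply: differentiableZl; apply: differentiable_comp; first exact: Lb_diff.
exact/derivable1_diffP/derivable_expR.
Qed.

Lemma Lb_delta j : @Lb R d b (delta_mx 0 j) = b j.
Proof.
rewrite /Lb (bigD1 j) //= mxE !eqxx mulr1 big1 ?addr0 // => i ij.
by rewrite mxE (negbTE ij) andbF mulr0.
Qed.

Lemma partial_gE j e : partial j (gE b e) = gE b (b j *: e).
Proof.
apply/funext => x; rewrite /partial (@derive_val _ _ _ _ _ _ _ (gE_derive b e x _)).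
by rewrite Lb_delta /gE !scalerA mulrC.
Qed.

Lemma iter_gE js e : iter_partial js (gE b e) = gE b ((\prod_(j <- js) b j) *: e).
Proof.
elim: js e => [|j js IH] e /=; first by rewrite big_nil scale1r.
by rewrite IH partial_gE big_cons scalerA.
Qed.

Lemma smooth_gE e : smooth (gE b e).
Proof.
move=> js; rewrite iter_gE; split.
  by move=> x; apply: differentiable_continuous; exact: gE_diff.
by move=> j x; apply: diff_derivable; exact: gE_diff.
Qed.
End An.

Section Eval.
Variables (R : realType) (d : nat) (hd : (2 <= d)%N).
Definition bcol (c : 'I_2) : 'I_d -> R := fun j => ((j <= 1 - c)%N)%:R.
Definition ecol (c : 'I_2) : 'rV[R]_d := delta_mx ord0 (widen_ord hd c).
Definition fld (c : 'I_2) : vfield R d := gE (bcol c) (ecol c).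

Lemma Lb0 (b : 'I_d -> R) : Lb b 0 = 0.
Proof. by rewrite /Lb big1 // => i _; rewrite mxE mulr0. Qed.

Lemma fld0 js c : iter_partial js (fld c) 0 = (\prod_(j <- js) bcol c j) *: ecol c.
Proof. by rewrite /fld iter_gE /gE Lb0 expR0 scale1r. Qed.

Lemma prod_all (T : Type) (x0 : T) (s : seq T) (P : pred T) :
  \prod_(m < size s) ((P (nth x0 s m))%:R : R) = (all P s)%:R.
Proof.
elim: s => [|w s IH]; first by rewrite big_ord0.
rewrite /= big_ord_recl /= -mulnb natrM -IH; congr (_ * _).

Qed.

Variables (n : nat) (E : {set 'I_n * 'I_n}) (col : 'I_n -> 'I_2).

Fixpoint goodF (k : nat) (u : 'I_n) : bool :=
  match k with
  | 0 => false
  | k'.+1 => all (fun w => goodF k' w && (col w <= 1 - col u)%N) (children E u)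
  end.

Lemma elemF_eval k u :
  elemF E (fun i => fld (col i)) k u 0 = (goodF k u)%:R *: ecol (col u).
Proof.
elim: k u => [|k IH] u /=; first by rewrite scale0r.
set cs := children E u.
rewrite (eq_bigr (fun J : {ffun 'I_(size cs) -> 'I_d} =>
   (\prod_(m < size cs) ((goodF k (nth u cs m))%:R * ecol (col (nth u cs m)) ord0 (J m)
       * bcol (col u) (J m))) *: ecol (col u))); last first.
  move=> J _; rewrite fld0 scalerA; congr (_ *: _).
  rewrite big_map big_enum /= -big_split /=; apply: eq_bigr => m _.
  by rewrite IH mxE.
rewrite -scaler_suml; congr (_ *: _).
rewrite -(bigA_distr_bigA (fun (m : 'I_(size cs)) (j : 'I_d) =>
   (goodF k (nth u cs m))%:R * ecol (col (nth u cs m)) ord0 j * bcol (col u) j)) /=.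
rewrite -(prod_all u); apply: eq_bigr => m _.
rewrite (bigD1 (widen_ord hd (col (nth u cs m)))) //= big1 ?addr0; last first.
  by move=> j /negbTE jn; rewrite mxE jn andbF mulr0 mul0r.
by rewrite mxE !eqxx mulr1 /bcol /= -natrM mulnb.
Qed.
End Eval.

Section Comb.
Variables (n : nat).
Implicit Types (E : {set 'I_n * 'I_n}).

Definition erel E : rel 'I_n := fun a b => (a, b) \in E.

Definition rooted E r : Prop :=
  [/\ #|parents E r| = 0%N, forall v, v != r -> #|parents E v| = 1%N &
      forall v, connect (erel E) r v].

Lemma rtreeP E : is_rtree E -> exists r, rooted E r.
Proof.
case/existsP => r /forallP H; exists r; split.
- by have /and3P[/eqP + _ _] := H r; rewrite eqxx => /eqP.
- by move=> v vr; have /and3P[_ /implyP/(_ vr)/eqP -> _] := H v.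
- by move=> v; have /and3P[_ _ ->] := H v.
Qed.

Lemma rooted_noparent E r u : rooted E r -> (u, r) \in E -> False.
Proof.
case=> h0 _ _ ur.
have : (0 < #|parents E r|)%N by apply/card_gt0P; exists u; rewrite inE.
by rewrite h0.
Qed.

Lemma rooted_uniqparent E r u u' v : rooted E r -> (u, v) \in E -> (u', v) \in E -> u = u'.
Proof.
move=> hr uv u'v; have vr : v != r.
  by apply/negP => /eqP vr; subst v; exact: (rooted_noparent hr uv).
case: hr => _ h1 _; have /eqP/cards1P [z hz] := h1 v vr.
have : u \in parents E v by rewrite inE.
have : u' \in parents E v by rewrite inE.
by rewrite hz !inE => /eqP -> /eqP ->.
Qed.

Lemma rooted_hasparent E r v : rooted E r -> v != r -> exists u, (u, v) \in E.
Proof.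
case=> _ h1 _ vr; have /eqP/cards1P [z hz] := h1 v vr.
exists z; have : z \in parents E v by rewrite hz set11.
by rewrite inE.
Qed.

Lemma PC E r (C : 'I_n -> Prop) : rooted E r ->
  (forall v, C v -> exists u, C u /\ (u, v) \in E) -> forall v, ~ C v.
Proof.
move=> hr hC v Cv.
have key : forall p x, path (erel E) x p -> C (last x p) -> C x.
  elim=> [|y p IH] x //= /andP [xy py] Cl.
  have Cy := IH y py Cl.
  have [u [Cu uy]] := hC y Cy.
  by rewrite (rooted_uniqparent hr xy uy).
have [_ _ hc] := hr.
have /connectP [p pp vl] := hc v.
have Cr : C r by apply: (key p); rewrite -?vl.
have [u [_ ur]] := hC r Cr.
exact: (rooted_noparent hr ur).
Qed.

Lemma noloop E r a : rooted E r -> (a, a) \in E -> False.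
Proof.
move=> hr aa; apply: (PC hr (C := fun v => v = a)) (erefl a).
by move=> v ->; exists a.
Qed.

Lemma nowalk E r u p : rooted E r -> path (erel E) u p -> (size p < n)%N.
Proof.
move=> hr pp; rewrite ltnNge; apply/negP => hs.
have : ~~ uniq (u :: p).
  apply/negP => /card_uniqP U.
  have := max_card (mem (u :: p)); rewrite U card_ord /= => h.
  by rewrite ltnNge hs in h.
case/(uniqPn u) => i [j [ij js eqij]].
pose s := u :: p.
pose C := fun v => exists k, [/\ (i < k)%N, (k <= j)%N & nth u s k = v].
apply: (PC hr (C := C)) (ex_intro _ j (And3 ij (leqnn j) (erefl _))).
move=> v [k [ik kj <-]].
have k0 : (0 < k)%N by apply: leq_ltn_trans ik.
have kp : (k.-1 < size p)%N.
  by rewrite -ltnS prednK //; apply: leq_trans kj _; rewrite -ltnS.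
have e := (pathP u pp) _ kp.
have hk : nth u p k.-1 = nth u s k by rewrite /s -[in RHS](prednK k0).
exists (nth u s k.-1); split; last by rewrite -hk.
case: (ltngtP i k.-1) => h.
- by exists k.-1; split => //; apply: leq_trans kj; apply: leq_pred.
- by move: ik; rewrite -(prednK k0) ltnS leqNgt h.
- by exists j; split => //; rewrite -h.
Qed.

Lemma same_sub E1 E2 r : rooted E1 r -> rooted E2 r ->
  (forall a b, (a, b) \in E1 -> ((a, b) \in E2) || ((b, a) \in E2)) ->
  forall a b, (a, b) \in E1 -> (a, b) \in E2.
Proof.
move=> h1 h2 adj.
pose C := fun v => exists a, (a, v) \in E1 /\ (a, v) \notin E2.
have PC1 := PC h1 (C := C).
move=> a b ab; apply/negPn/negP => nab.
apply: (PC1 _ b); last by exists a.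
move=> v [w [wv nwv]]; exists w; split => //.
have vw : (v, w) \in E2 by move: (adj _ _ wv); rewrite (negbTE nwv).
have wr : w != r.
  by apply/negP => /eqP wr; subst w; exact: (rooted_noparent h2 vw).
have [c cw] := rooted_hasparent h1 wr.
exists c; split => //; apply/negP => cw2.
have cv : c = v by apply: (rooted_uniqparent h2 cw2 vw).
subst c.
apply: (PC h1 (C := fun x => x = v \/ x = w)) (or_introl (erefl v)).
move=> x [->|->]; first by exists w; split => //; right.
by exists v; split => //; left.
Qed.

End Comb.

Lemma I2_le (c c' : 'I_2) : (c' <= 1 - c)%N = ~~ ((c == 1 :> nat) && (c' == 1 :> nat)).
Proof. by case: c => [[|[|]]] //= _; case: c' => [[|[|]]]. Qed.

Section G.
Variables (n : nat) (E : {set 'I_n * 'I_n}) (col : 'I_n -> 'I_2).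

Definition gg : bool :=
  [exists a, exists b, [&& (a, b) \in E, col a == 1 :> nat & col b == 1 :> nat]].

Lemma goodA k u p b : path (erel E) u p -> (last u p, b) \in E ->
  col (last u p) == 1 :> nat -> col b == 1 :> nat -> goodF E col k u = false.
Proof.
elim: k u p => [|k IH] u p //= pp lb cl cb.
apply/allP => H.
case: p pp lb cl => [|w p] /= pp lb cl.
  have hb : b \in children E u by rewrite /children mem_filter mem_enum andbT.
  have /andP [_] := H b hb.
  by rewrite I2_le cl cb.
case/andP: pp => uw pw.
have hw : w \in children E u by rewrite /children mem_filter mem_enum andbT.
have /andP [+ _] := H w hw.
by rewrite (IH w p pw lb cl cb).
Qed.

Lemma goodB : ~~ gg -> forall k u, (forall p, path (erel E) u p -> (size p < k)%N) ->
  goodF E col k u.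
Proof.
move=> ngg; elim=> [|k IH] u hp /=; first by have := hp [::] isT.
apply/allP => w; rewrite /children mem_filter mem_enum andbT => uw.
apply/andP; split.
  apply: IH => p pw; have := hp (w :: p); rewrite /= pw andbT => /(_ uw).
  by rewrite ltnS.
rewrite I2_le; apply/negP => /andP [cu cw]; move: ngg => /negP; apply.
by apply/existsP; exists u; apply/existsP; exists w; rewrite uw cu cw.
Qed.

Lemma goodF_root r : rooted E r -> goodF E col n r = ~~ gg.
Proof.
move=> hr; case g : gg => /=.
  move: g => /existsP [a /existsP [b /and3P [ab ca cb]]].
  have [_ _ hc] := hr.
  have /connectP [p pp al] := hc a.
  by rewrite al in ab ca; exact: goodA pp ab ca cb.
by apply: goodB; [rewrite g | move=> p pp; exact: (nowalk hr pp)].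
Qed.
End G.

Section Main.
Variables (R : realType) (d : nat) (hd : (2 <= d)%N).

Definition G : 'I_2 -> Cd R d := fun c => exist _ (@fld R d hd c) (smooth_gE _ _).

Lemma Fk_eval n (t : RT n) col r : rooted (val t) r ->
  @Fk R d n t col G 0 = (~~ gg (val t) col)%:R *: @ecol R d hd (col r).
Proof.
move=> hr; rewrite /Fk /F -(goodF_root col hr) -(@elemF_eval R d hd).
rewrite /Defs.root; case: pickP => [r' /eqP h|h].
  have -> // : r' = r.
  apply/eqP; apply/negPn/negP => rr; have [_ h1 _] := hr.
  by rewrite h1 in h.
by have [h0 _ _] := hr; move: (h r); rewrite h0 eqxx.
Qed.
End Main.

Definition ind n (S : pred 'I_n) : 'I_n -> 'I_2 := fun i => if S i then ord_max else ord0.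

Lemma gg_single n (E : {set 'I_n * 'I_n}) r v : rooted E r -> gg E (ind (pred1 v)) = false.
Proof.
move=> hr; apply/negbTE/negP => /existsP [a /existsP [b /and3P [ab]]].
move: ab; rewrite /ind /=; case: (eqVneq a v) => [-> | _] //; case: (eqVneq b v) => [-> | _] // ab _ _.
exact: (noloop hr ab).
Qed.

Lemma gg_pair n (E : {set 'I_n * 'I_n}) r a b : rooted E r -> a != b ->
  gg E (ind [pred i | (i == a) || (i == b)]) = ((a, b) \in E) || ((b, a) \in E).
Proof.
move=> hr nab; apply/idP/idP.
  move=> /existsP [x /existsP [y /and3P [xy]]].
  rewrite /ind /=; case: ifP => // hx _; case: ifP => // hy _.
  case/orP: hx => /eqP ex; case/orP: hy => /eqP ey; subst x y.
  - by case: (noloop hr xy).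
  - by rewrite xy.
  - by rewrite xy orbT.
  - by case: (noloop hr xy).
case/orP => h; apply/existsP.
  by exists a; apply/existsP; exists b; rewrite h /ind /= !eqxx orbT.
by exists b; apply/existsP; exists a; rewrite h /ind /= !eqxx orbT.
Qed.

Lemma ecol_entry (R : realType) d (hd : (2 <= d)%N) (c c' : 'I_2) :
  @ecol R d hd c ord0 (widen_ord hd c') = (c == c')%:R.
Proof.
rewrite /ecol mxE eqxx /=; congr (_%:R).
by rewrite -val_eqE /= eq_sym.
Qed.

Theorem theorem6p1 (R : realType) (d : nat) (hd : (2 <= d)%N)
    (CD : nat -> Type) (act : forall n, {perm 'I_n} -> CD n -> CD n)
    (H : forall n, CD n -> ('I_n -> 'I_2) -> Map R d)
    (p : forall n, RT n -> CD n) :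
  weak_comb_descr act H -> compatible_RT act H p ->
  forall n, bijective (p n).
Proof.
move=> _ [_ hsurj hcomp] n.
have inj : injective (p n).
  move=> t1 t2 e12.
  have hF : forall x, @Fk R d n t1 x (G R hd) 0 = @Fk R d n t2 x (G R hd) 0.
    by move=> x; rewrite !hcomp e12.
  have [r1 h1] := rtreeP (valP t1).
  have [r2 h2] := rtreeP (valP t2).
  have er : r2 = r1.
    have := hF (ind (pred1 r1)).
    rewrite (Fk_eval R hd _ h1) (Fk_eval R hd _ h2) (gg_single _ h1) (gg_single _ h2) /= !scale1r.
    move/(congr1 (fun M : 'rV[R]_d => M ord0 (widen_ord hd ord_max))).
    rewrite !ecol_entry /ind /= eqxx.
    by case: (eqVneq r2 r1) => // _ /=; rewrite ?mulr1n ?mulr0n => /eqP; rewrite oner_eq0.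
  subst r2.
  have adj : forall a b, a != b ->
      ((a, b) \in val t1) || ((b, a) \in val t1) = ((a, b) \in val t2) || ((b, a) \in val t2).
    move=> a b nab.
    have := hF (ind [pred i | (i == a) || (i == b)]).
    rewrite (Fk_eval R hd _ h1) (Fk_eval R hd _ h2) (gg_pair h1 nab) (gg_pair h2 nab).
    set c := ind _ r1.
    move/(congr1 (fun M : 'rV[R]_d => M ord0 (widen_ord hd c))).
    rewrite !mxE !eqxx /= !mulr1.
    by case: (_ || _); case: (_ || _) => //=; rewrite ?mulr1n ?mulr0n => /eqP; rewrite ?oner_eq0 // eq_sym oner_eq0.
  have sub : forall (E1 E2 : {set 'I_n * 'I_n}), rooted E1 r1 -> rooted E2 r1 ->
      (forall a b, a != b -> ((a, b) \in E1) || ((b, a) \in E1) = ((a, b) \in E2) || ((b, a) \in E2)) ->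
      forall a b, (a, b) \in E1 -> (a, b) \in E2.
    move=> E1 E2 k1 k2 hadj; apply: (same_sub k1 k2) => a b ab.
    have nab : a != b by apply/negP => /eqP eab; subst b; exact: (noloop k1 ab).
    by rewrite -hadj // ab.
  apply: val_inj; apply/setP => [[a b]]; apply/idP/idP.
    exact: (sub _ _ h1 h2 adj).
  by apply: (sub _ _ h2 h1) => a' b' nab; rewrite adj.
pose g := fun c : CD n => projT1 (cid (hsurj n c)).
exists g.
  by move=> t; apply: inj; rewrite /g; case: cid.
by move=> c; rewrite /g; case: cid.
Qed.
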